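(* Let $\Bbbk$ be an algebraically closed field of characteristic $2$ and let $\mathfrak{u}(\mathfrak{m})$ be the algebra generated by $a,b,c$ with relations $ab+ba=c$, $ac+ca=a$, $bc+cb=b$, $a^4=b^4=0$, $c^2+c=0$. Then the projective cover $P(V_0)$ and the injective envelope $I(V_0)$ of $V_0$ are both isomorphic to $M$, and the projective cover $P(V_1)$ and injective envelope $I(V_1)$ of $V_1$ are both isomorphic to $N$.
   Context: $V_0$ is the one-dimensional module with $a,b,c$ acting by $0$; $V_1$ is the three-dimensional module with basis $v_1,v_2,v_3$, $av_1=v_2$, $av_2=v_3$, $av_3=0$, $bv_1=0$, $bv_2=v_1$, $bv_3=v_2$, $cv_1=v_1$, $cv_2=0$, $cv_3=v_3$. $M$ is the $8$-dimensional module with basis $v_1,\dots,v_4,w_1,\dots,w_4$ and action: $av_i=v_{i+1}$ ($i=1,2,3$), $av_4=0$; $bv_1=bv_4=0$, $bv_i=v_{i-1}$ ($i=2,3$); $cv_i=v_i$ ($i=1,3$), $cv_i=0$ ($i=2,4$); $aw_i=w_{i+1}$ ($i=1,2,3$), $aw_4=0$; $bw_i=v_{i+2}$ ($i=1,2$), $bw_i=w_{i-1}$ ($i=3,4$); $cw_i=0$ ($i=1,3$), $cw_i=w_i$ ($i=2,4$). $N$ is the $8$-dimensional module with basis $v_1,\dots,v_4,w_1,\dots,w_4$ and action: $av_i=v_{i+1}$ ($i=1,2,3$), $av_4=0$; $bv_i=0$ ($i=1,2$), $bv_i=v_{i-1}$ ($i=3,4$); $cv_i=0$ ($i=1,3$),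 $cv_i=v_i$ ($i=2,4$); $aw_i=w_{i+1}$ ($i=1,2,3$), $aw_4=0$; $bw_i=v_i$ ($i=1,4$), $bw_i=v_i+w_{i-1}$ ($i=2,3$); $cw_i=w_i$ ($i=1,3$), $cw_i=0$ ($i=2,4$). *)

(* Defs.v *)
From HB Require Import structures.
From mathcomp Require Import all_boot all_order all_algebra.
Set Implicit Arguments. Unset Strict Implicit. Unset Printing Implicit Defensive.
Import GRing.Theory.
Local Open Scope ring_scope.

(* A finite-dimensional (left) module over the free algebra k<a,b,c>:
   a vector space F^dim (column vectors) with three operators giving the
   action of a, b, c.  Entry (i, j) of a matrix is the coefficient of e_i
   in x . e_j. *)
Record umod (F : fieldType) := UMod {
  udim : nat;
  actA : 'M[F]_udim;
  actB : 'M[F]_udim;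
  actC : 'M[F]_udim }.

Definition is_umod (F : fieldType) (X : umod F) : Prop :=
  [/\ actA X *m actB X + actB X *m actA X = actC X,
      actA X *m actC X + actC X *m actA X = actA X,
      actB X *m actC X + actC X *m actB X = actB X,
      actA X ^+ 4 = 0 /\ actB X ^+ 4 = 0
    & actC X *m actC X + actC X = 0].

Definition is_hom (F : fieldType) (X Y : umod F) (f : 'M[F]_(udim Y, udim X)) :=
  [/\ f *m actA X = actA Y *m f, f *m actB X = actB Y *m f
    & f *m actC X = actC Y *m f].

Definition surj (F : fieldType) m n (f : 'M[F]_(m, n)) : Prop := \rank f = m.
Definition inj (F : fieldType) m n (f : 'M[F]_(m, n)) : Prop := \rank f = n.

Definition isomorphic (F : fieldType) (X Y : umod F) : Prop :=
  exists (f : 'M[F]_(udim Y, udim X)) (g : 'M[F]_(udim X, udim Y)),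
    [/\ is_hom f, is_hom g, g *m f = 1%:M & f *m g = 1%:M].

Definition projective (F : fieldType) (P : umod F) : Prop :=
  forall (X Y : umod F) (g : 'M[F]_(udim Y, udim X)) (h : 'M[F]_(udim Y, udim P)),
    is_umod X -> is_umod Y -> is_hom g -> surj g -> is_hom h ->
    exists k : 'M[F]_(udim X, udim P), is_hom k /\ g *m k = h.

Definition injective (F : fieldType) (I : umod F) : Prop :=
  forall (X Y : umod F) (g : 'M[F]_(udim Y, udim X)) (h : 'M[F]_(udim I, udim X)),
    is_umod X -> is_umod Y -> is_hom g -> inj g -> is_hom h ->
    exists k : 'M[F]_(udim I, udim Y), is_hom k /\ k *m g = h.

Definition essential_epi (F : fieldType) (P V : umod F) (p : 'M[F]_(udim V, udim P)) :=
  [/\ is_hom p, surj p &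
      forall (X : umod F) (g : 'M[F]_(udim P, udim X)),
        is_umod X -> is_hom g -> surj (p *m g) -> surj g].

Definition essential_mono (F : fieldType) (V I : umod F) (i : 'M[F]_(udim I, udim V)) :=
  [/\ is_hom i, inj i &
      forall (X : umod F) (g : 'M[F]_(udim X, udim I)),
        is_umod X -> is_hom g -> inj (g *m i) -> inj g].

Definition projective_cover (F : fieldType) (P V : umod F) : Prop :=
  [/\ is_umod P, projective P & exists p, @essential_epi F P V p].

Definition injective_envelope (F : fieldType) (I V : umod F) : Prop :=
  [/\ is_umod I, injective I & exists i, @essential_mono F V I i].

(* "P(V) is isomorphic to M": M is a projective cover of V, and every
   projective cover of V is isomorphic to M (similarly for I(V)). *)
Definition proj_cover_iso (F : fieldType) (V M : umod F) : Prop :=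
  projective_cover M V /\ forall P, projective_cover P V -> isomorphic P M.

Definition inj_env_iso (F : fieldType) (V M : umod F) : Prop :=
  injective_envelope M V /\ forall I, injective_envelope I V -> isomorphic I M.

(* 0/1 matrix whose (i,j) entry is 1 iff (i,j) is in s (0-based indices) *)
Definition mx01 (F : fieldType) n (s : seq (nat * nat)) : 'M[F]_n :=
  \matrix_(i < n, j < n) (if (nat_of_ord i, nat_of_ord j) \in s then 1 else 0).

Definition V0 (F : fieldType) : umod F := @UMod F 1 0 0 0.

(* basis v1,v2,v3 = indices 0,1,2 *)
Definition V1 (F : fieldType) : umod F :=
  @UMod F 3 (mx01 F 3 [:: (1,0); (2,1)])%N
            (mx01 F 3 [:: (0,1); (1,2)])%N
            (mx01 F 3 [:: (0,0); (2,2)])%N.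

(* basis v1..v4 = indices 0..3, w1..w4 = indices 4..7 *)
Definition Mmod (F : fieldType) : umod F :=
  @UMod F 8 (mx01 F 8 [:: (1,0); (2,1); (3,2); (5,4); (6,5); (7,6)])%N
            (mx01 F 8 [:: (0,1); (1,2); (2,4); (3,5); (5,6); (6,7)])%N
            (mx01 F 8 [:: (0,0); (2,2); (5,5); (7,7)])%N.

Definition Nmod (F : fieldType) : umod F :=
  @UMod F 8 (mx01 F 8 [:: (1,0); (2,1); (3,2); (5,4); (6,5); (7,6)])%N
            (mx01 F 8 [:: (1,2); (2,3); (0,4); (3,7); (1,5); (4,5); (2,6); (5,6)])%N
            (mx01 F 8 [:: (1,1); (3,3); (4,4); (6,6)])%N.

(* Main.v *)
From HB Require Import structures.
From mathcomp Require Import all_boot all_order all_algebra.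
Require Import Defs.
Set Implicit Arguments. Unset Strict Implicit. Unset Printing Implicit Defensive.
Import GRing.Theory.

Fixpoint bsum (n : nat) (h : nat -> bool) : bool :=
  match n with 0 => false | S k => addb (bsum k h) (h k) end.

Definition bmxeqb (m n : nat) (f g : nat -> nat -> bool) : bool :=
  all (fun i => all (fun j => eqb (f i j) (g i j)) (iota 0 n)) (iota 0 m).

Definition tab m n (f : nat -> nat -> bool) : seq (seq bool) :=
  [seq [seq f i j | j <- iota 0 n] | i <- iota 0 m].
Definition mat m n (f : nat -> nat -> bool) : nat -> nat -> bool :=
  let T := tab m n f in fun i j => nth false (nth [::] T i) j.

Lemma matE m n f i j : (i < m)%N -> (j < n)%N -> mat m n f i j = f i j.
Proof.
move=> hi hj; rewrite /mat /tab (nth_map 0%N) ?size_iota // nth_iota //.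
by rewrite (nth_map 0%N) ?size_iota // nth_iota.
Qed.

Definition bmul n (f g : nat -> nat -> bool) := fun i j => bsum n (fun k => f i k && g k j).
Definition badd (f g : nat -> nat -> bool) := fun i j : nat => addb (f i j) (g i j).

Section BMX.
Local Open Scope ring_scope.
Variable F : fieldType.
Hypothesis char2 : (2%N \in [pchar F])%R.

Lemma two0 : (2%:R : F) = 0. Proof. exact: pcharf0 char2. Qed.

Lemma one_one : (1 : F) + 1 = 0.
Proof. by rewrite -two0 -[2%N]/(1+1)%N natrD. Qed.

Lemma natb_add (b1 b2 : bool) : ((addb b1 b2)%:R : F) = b1%:R + b2%:R.
Proof. by case: b1; case: b2; rewrite /= ?addr0 ?add0r // one_one. Qed.

Lemma natb_mul (b1 b2 : bool) : ((b1 && b2)%:R : F) = b1%:R * b2%:R.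
Proof. by case: b1; case: b2; rewrite /= ?mulr0 ?mul0r ?mulr1. Qed.

Definition bmx m n (f : nat -> nat -> bool) : 'M[F]_(m, n) :=
  \matrix_(i < m, j < n) ((f i j)%:R : F).

Lemma bsumE n (h : nat -> bool) :
  \sum_(k < n) ((h k)%:R : F) = (bsum n h)%:R.
Proof.
elim: n => [|n IH]; first by rewrite big_ord0.
by rewrite big_ord_recr /= IH natb_add.
Qed.

Lemma bmxM m n p f g :
  bmx m n f *m bmx n p g = bmx m p (fun i j => bsum n (fun k => f i k && g k j)).
Proof.
apply/matrixP=> i j; rewrite !mxE -bsumE; apply: eq_bigr => k _.
by rewrite !mxE natb_mul.
Qed.

Lemma bmx_mat m n f : bmx m n (mat m n f) = bmx m n f.
Proof. by apply/matrixP=> i j; rewrite !mxE matE. Qed.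

Lemma bmxMm m n p f g :
  bmx m n f *m bmx n p g = bmx m p (mat m p (bmul n f g)).
Proof. by rewrite bmx_mat bmxM. Qed.

Lemma bmxD m n f g :
  bmx m n f + bmx m n g = bmx m n (fun i j => addb (f i j) (g i j)).
Proof. by apply/matrixP=> i j; rewrite !mxE natb_add. Qed.

Lemma bmxDm m n f g :
  bmx m n f + bmx m n g = bmx m n (mat m n (badd f g)).
Proof. by rewrite bmx_mat bmxD. Qed.

Lemma bmx0 m n : bmx m n (fun _ _ => false) = 0.
Proof. by apply/matrixP=> i j; rewrite !mxE. Qed.

Lemma bmx1 n : bmx n n (fun i j => i == j) = 1%:M.
Proof. by apply/matrixP=> i j; rewrite !mxE. Qed.

Lemma bmx_tr m n f : (bmx m n f)^T = bmx n m (fun i j => f j i).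
Proof. by apply/matrixP=> i j; rewrite !mxE. Qed.

Lemma bmx_eq m n f g : bmxeqb m n f g -> bmx m n f = bmx m n g.
Proof.
move=> /allP H; apply/matrixP=> i j; rewrite !mxE.
have /H /allP /(_ j) : (i : nat) \in iota 0 m by rewrite mem_iota ltn_ord.
by rewrite mem_iota ltn_ord => /(_ isT) /eqP ->.
Qed.

Lemma mx01E n s : mx01 F n s = bmx n n (fun i j => (i, j) \in s).
Proof. by apply/matrixP=> i j; rewrite !mxE; case: ((_, _) \in s). Qed.

End BMX.
Definition word := seq nat.
Definition poly := seq word.

Definition norm (p : poly) : poly := [seq w <- undup p | odd (count_mem w p)].

Fixpoint isprefix (l w : word) : bool :=
  match l, w with
  | [::], _ => true
  | x :: l', y :: w' => (x == y) && isprefix l' w'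
  | _, _ => false
  end.

Fixpoint split_at (l w : word) : option (word * word) :=
  if isprefix l w then Some ([::], drop (size l) w) else
  match w with
  | [::] => None
  | x :: w' => match split_at l w' with Some (u, v) => Some (x :: u, v) | None => None end
  end.

Lemma isprefixP l w : isprefix l w -> w = l ++ drop (size l) w.
Proof.
elim: l w => [|x l IH] [|y w] //= /andP[/eqP-> /IH {1}->] //.
Qed.

Lemma split_atP l w u v : split_at l w = Some (u, v) -> w = u ++ l ++ v.
Proof.
elim: w u v => [|x w IH] u v /=.
  case: l => //= [[<- <-]] //.
case E: (isprefix l (x :: w)).
  by case=> <- <-; rewrite /= -(isprefixP E).
case S: (split_at l w) => [[u' v']|] // [<- <-].
by rewrite (IH _ _ S).
Qed.

Definition rels : seq poly :=
  [:: [:: [:: 1; 0]; [:: 0; 1]; [:: 2]];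
      [:: [:: 2; 0]; [:: 0; 2]; [:: 0]];
      [:: [:: 2; 1]; [:: 1; 2]; [:: 1]];
      [:: [:: 0; 0; 0; 0]];
      [:: [:: 1; 1; 1; 1]];
      [:: [:: 2; 2]; [:: 2]]]%N.

Fixpoint try_rules (w : word) (rs : seq poly) : option (word * poly * word) :=
  match rs with
  | [::] => None
  | r :: rs' => match split_at (head [::] r) w with
                | Some (u, v) => Some (u, r, v)
                | None => try_rules w rs'
                end
  end.

Fixpoint find_red (rs : seq poly) (q : poly) : option (word * poly * word) :=
  match q with
  | [::] => None
  | w :: q' => match try_rules w rs with Some t => Some t | None => find_red rs q' end
  end.

Definition sandw (u : word) (r : poly) (v : word) : poly := [seq u ++ x ++ v | x <- r].

Fixpoint nf (fuel : nat) (p : poly) : poly :=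
  match fuel with
  | 0 => p
  | S f => match find_red rels p with
           | Some (u, r, v) => nf f (norm (p ++ sandw u r v))
           | None => p
           end
  end.

Lemma try_rulesP w rs u r v : try_rules w rs = Some (u, r, v) -> r \in rs.
Proof.
elim: rs => //= r' rs IH.
case: (split_at _ _) => [[u' v'] [_ <- _]|/IH]; first by rewrite inE eqxx.
by rewrite inE orbC => ->.
Qed.

Lemma find_redP rs q u r v : find_red rs q = Some (u, r, v) -> r \in rs.
Proof.
elim: q => //= w q IH.
case E: (try_rules w rs) => [t|//].
by move=> T; rewrite T in E; exact: try_rulesP E.
Qed.

Section Eval.
Local Open Scope ring_scope.
Variable F : fieldType.
Hypothesis char2 : (2%N \in [pchar F])%R.

Definition gmx (X : umod F) (g : nat) : 'M[F]_(udim X) :=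
  match g with 0 => actA X | 1 => actB X | _ => actC X end.

Definition evalw (X : umod F) (w : word) : 'M[F]_(udim X) :=
  foldr (fun g acc => gmx X g *m acc) 1%:M w.

Definition evalp (X : umod F) (p : poly) : 'M[F]_(udim X) :=
  \sum_(w <- p) evalw X w.

Lemma evalw_cat X u v : evalw X (u ++ v) = evalw X u *m evalw X v.
Proof. by elim: u => [|g u IH] /=; rewrite ?mul1mx // IH mulmxA. Qed.

Lemma evalp_cat X p q : evalp X (p ++ q) = evalp X p + evalp X q.
Proof. by rewrite /evalp big_cat. Qed.

Lemma evalp_sandw X u r v : evalp X (sandw u r v) = evalw X u *m evalp X r *m evalw X v.
Proof.
rewrite /evalp big_map mulmx_sumr mulmx_suml; apply: eq_bigr => w _.
by rewrite !evalw_cat mulmxA.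
Qed.

Lemma addxx m n (x : 'M[F]_(m, n)) : x + x = 0.
Proof. by rewrite -mulr2n -scaler_nat (pcharf0 char2) scale0r. Qed.

Lemma mulrn_odd m n (x : 'M[F]_(m, n)) k : x *+ k = x *+ odd k.
Proof.
elim: k => [|k IH] //; rewrite mulrS IH /=.
by case: (odd k) => /=; rewrite ?addxx ?addr0.
Qed.

Lemma evalp_norm X p : evalp X (norm p) = evalp X p.
Proof.
rewrite /evalp /norm big_filter.
rewrite -[RHS](big_undup_iterop_count _ _ _ (fun w => evalw X w)).
rewrite big_mkcond; apply: eq_bigr => w _.
rewrite Monoid.iteropE.
have -> : forall k, iter k (+%R (evalw X w)) 0 = evalw X w *+ k.
  by elim=> [|k IH] //=; rewrite IH mulrS.
by rewrite mulrn_odd; case: (odd _).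
Qed.

Lemma rels0 X : is_umod X -> forall r, r \in rels -> evalp X r = 0.
Proof.
case=> h1 h2 h3 [h4 h5] h6 r.
rewrite !inE => /orP[/eqP->|/orP[/eqP->|/orP[/eqP->|/orP[/eqP->|/orP[/eqP->|/eqP->]]]]];
  rewrite /evalp !big_cons big_nil /= ?mulmx1 ?addr0.
- by rewrite addrA [_ + actA X *m _]addrC h1 addxx.
- by rewrite addrA [_ + actA X *m _]addrC h2 addxx.
- by rewrite addrA [_ + actB X *m _]addrC h3 addxx.
- by rewrite -h4 !mulmxE !exprS expr0 mulr1.
- by rewrite -h5 !mulmxE !exprS expr0 mulr1.
- by rewrite h6.
Qed.

Lemma nf_sound X : is_umod X -> forall fuel p, evalp X (nf fuel p) = evalp X p.
Proof.
move=> hX; elim=> [|f IH] p //=.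
case E: (find_red rels p) => [[[u r] v]|//].
rewrite IH evalp_norm evalp_cat evalp_sandw (rels0 hX (find_redP E)).
by rewrite mulmx0 mul0mx addr0.
Qed.

End Eval.
Section Theory.
Local Open Scope ring_scope.
Variable F : fieldType.

Lemma hom_gmx (X Y : umod F) (f : 'M[F]_(udim Y, udim X)) g :
  is_hom f -> f *m gmx X g = gmx Y g *m f.
Proof. by case=> h1 h2 h3; case: g => [|[|g]]. Qed.

Lemma hom_evalw (X Y : umod F) (f : 'M[F]_(udim Y, udim X)) w :
  is_hom f -> f *m evalw X w = evalw Y w *m f.
Proof.
move=> hf; elim: w => [|g w IH] /=; first by rewrite mulmx1 mul1mx.
by rewrite mulmxA hom_gmx // -mulmxA IH mulmxA.
Qed.

Lemma hom_evalp (X Y : umod F) (f : 'M[F]_(udim Y, udim X)) p :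
  is_hom f -> f *m evalp X p = evalp Y p *m f.
Proof.
move=> hf; rewrite /evalp mulmx_sumr mulmx_suml; apply: eq_bigr => w _.
exact: hom_evalw.
Qed.

Lemma hom_comp (X Y Z : umod F) (f : 'M[F]_(udim Z, udim Y)) (g : 'M[F]_(udim Y, udim X)) :
  is_hom f -> is_hom g -> is_hom (f *m g).
Proof.
case=> f1 f2 f3 [g1 g2 g3]; split;
  by rewrite -mulmxA ?g1 ?g2 ?g3 mulmxA ?f1 ?f2 ?f3 mulmxA.
Qed.

Lemma mulmx1C_gen m n (A : 'M[F]_(m, n)) (B : 'M[F]_(n, m)) :
  m = n -> A *m B = 1%:M -> B *m A = 1%:M.
Proof. move=> e; subst n; exact: mulmx1C. Qed.

Lemma iso_of_full (X Y : umod F) (f : 'M[F]_(udim Y, udim X)) :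
  is_hom f -> udim X = udim Y -> \rank f = udim Y -> isomorphic X Y.
Proof.
move=> hf e rf.
have /row_freeP [B hB] : row_free f by rewrite /row_free rf.
have hB' : B *m f = 1%:M by apply: mulmx1C_gen hB; rewrite e.
exists f, B; split => //.
case: hf => f1 f2 f3; split.
- by rewrite -[B *m _]mulmx1 -hB !mulmxA -[B *m _ *m f]mulmxA -f1 mulmxA hB' mul1mx.
- by rewrite -[B *m _]mulmx1 -hB !mulmxA -[B *m _ *m f]mulmxA -f2 mulmxA hB' mul1mx.
- by rewrite -[B *m _]mulmx1 -hB !mulmxA -[B *m _ *m f]mulmxA -f3 mulmxA hB' mul1mx.
Qed.

Lemma pc_unique (V M P : umod F) :
  is_umod V -> projective_cover M V -> projective_cover P V -> isomorphic P M.
Proof.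
move=> uV [uM pM [p [hp sp ep]]] [uP pP [p' [hp' sp' ep']]].
have [f [hf ef]] := pP M V p p' uM uV hp sp hp'.
have sf : surj f by apply: (ep P f uP hf); rewrite /surj ef.
have [g [hg eg]] := pM P V p' p uP uV hp' sp' hp.
have sg : surj g by apply: (ep' M g uM hg); rewrite /surj eg.
apply: (iso_of_full hf) => //.
apply/eqP; rewrite eqn_leq.
have := rank_leq_col f; have := rank_leq_col g.
by rewrite /surj in sf sg; rewrite sf sg => -> ->.
Qed.

Lemma ie_unique (V M I : umod F) :
  is_umod V -> injective_envelope M V -> injective_envelope I V -> isomorphic I M.
Proof.
move=> uV [uM iM [i [hi ii ei]]] [uI iI [i' [hi' ii' ei']]].
have [f [hf ef]] := iM V I i' i uV uI hi' ii' hi.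
have jf : inj f by apply: (ei' M f uM hf); rewrite /inj ef.
have [g [hg eg]] := iI V M i i' uV uM hi ii hi'.
have jg : inj g by apply: (ei I g uI hg); rewrite /inj eg.
have e : udim I = udim M.
  apply/eqP; rewrite eqn_leq.
  have := rank_leq_row f; have := rank_leq_row g.
  by rewrite /inj in jf jg; rewrite jf jg => -> ->.
by apply: (iso_of_full hf e); rewrite jf.
Qed.

Lemma proj_retract (Q M : umod F) (i : 'M[F]_(udim Q, udim M)) (p : 'M[F]_(udim M, udim Q)) :
  is_hom i -> is_hom p -> p *m i = 1%:M -> projective Q -> projective M.
Proof.
move=> hi hp epi pQ X Y g h uX uY hg sg hh.
have [k [hk ek]] := pQ X Y g (h *m p) uX uY hg sg (hom_comp hh hp).
exists (k *m i); split; first exact: hom_comp.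
by rewrite mulmxA ek -mulmxA epi mulmx1.
Qed.

Lemma inj_iso (I J : umod F) : isomorphic I J -> injective I -> injective J.
Proof.
move=> [f [g [hf hg gf fg]]] iI X Y gg h uX uY hgg igg hh.
have [k [hk ek]] := iI X Y gg (g *m h) uX uY hgg igg (hom_comp hg hh).
exists (f *m k); split; first exact: hom_comp.
by rewrite -mulmxA ek mulmxA fg mul1mx.
Qed.

Definition trm (X : umod F) : umod F :=
  @UMod F (udim X) (actA X)^T (actB X)^T (actC X)^T.

Lemma trmxX n (A : 'M[F]_n) k : (A ^+ k)^T = (A^T) ^+ k.
Proof.
elim: k => [|k IH]; first by rewrite !expr0 trmx1.
by rewrite exprSr exprS -IH -!mulmxE trmx_mul.
Qed.

Lemma umod_trm X : is_umod X -> is_umod (trm X).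
Proof.
case=> h1 h2 h3 [h4 h5] h6; split => /=.
- by rewrite -!trmx_mul -linearD /= addrC h1.
- by rewrite -!trmx_mul -linearD /= addrC h2.
- by rewrite -!trmx_mul -linearD /= addrC h3.
- by rewrite -!trmxX h4 h5 !trmx0.
- by rewrite -!trmx_mul -linearD /= h6 trmx0.
Qed.

Lemma tr_comm m n (f : 'M[F]_(m, n)) A B : f *m A = B *m f -> f^T *m B^T = A^T *m f^T.
Proof. by move=> e; rewrite -!trmx_mul e. Qed.

Lemma proj_tr_inj P : projective P -> injective (trm P).
Proof.
move=> pP X Y g h uX uY [g1 g2 g3] ig [h1 h2 h3].
have hgT : @is_hom F (trm Y) (trm X) g^T by split; apply: tr_comm.
have sgT : @surj F (udim X) (udim Y) g^T by rewrite /surj mxrank_tr.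
have hhT : @is_hom F P (trm X) h^T.
  by split; [rewrite -[actA P]trmxK | rewrite -[actB P]trmxK | rewrite -[actC P]trmxK]; apply: tr_comm.
have [k [[k1 k2 k3] ek]] := pP (trm Y) (trm X) g^T h^T (umod_trm uY) (umod_trm uX) hgT sgT hhT.
exists k^T; split.
- by split => /=; [rewrite -[actA Y]trmxK | rewrite -[actB Y]trmxK | rewrite -[actC Y]trmxK]; apply: tr_comm.
- by rewrite -[g]trmxK -trmx_mul ek trmxK.
Qed.

Lemma mul_delta_col m n (A : 'M[F]_(m, n)) (i : 'I_n) k :
  (A *m delta_mx i (0 : 'I_1)) k 0 = A k i.
Proof.
rewrite mxE (bigD1 i) //= big1 ?addr0; first by rewrite mxE !eqxx mulr1.
by move=> j /negbTE nj; rewrite mxE nj mulr0.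
Qed.

Definition Smx (X : umod F) (q : nat -> poly) (m1 : 'cV[F]_(udim X)) : 'M[F]_(udim X) :=
  \matrix_(k, i) (evalp X (q i) *m m1) k 0.

Lemma end_form (X : umod F) (m0 m1 : 'cV[F]_(udim X)) (r1 r2 : 'rV[F]_(udim X))
  (q : nat -> poly) (t : poly) :
  (forall i : 'I_(udim X), evalp X (q i) *m m0 = delta_mx i 0) ->
  evalp X t = m0 *m r1 + m1 *m r2 ->
  evalp X t *m m0 = m0 ->
  forall phi : 'M[F]_(udim X), @is_hom F X X phi ->
  phi = (r1 *m phi *m m0) 0 0 *: 1%:M + (r2 *m phi *m m0) 0 0 *: Smx q m1.
Proof.
move=> Hq Ht Ht0 phi hphi.
have ev : phi *m m0 = (r1 *m phi *m m0) 0 0 *: m0 + (r2 *m phi *m m0) 0 0 *: m1.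
  have e1 : r1 *m (phi *m m0) = ((r1 *m phi *m m0) 0 0)%:M
    by rewrite mulmxA {1}[r1 *m phi *m m0]mx11_scalar.
  have e2 : r2 *m (phi *m m0) = ((r2 *m phi *m m0) 0 0)%:M
    by rewrite mulmxA {1}[r2 *m phi *m m0]mx11_scalar.
  rewrite -{1}Ht0 mulmxA hom_evalp // -mulmxA Ht mulmxDl.
  by rewrite -[m0 *m r1 *m _]mulmxA -[m1 *m r2 *m _]mulmxA e1 e2 !mul_mx_scalar.
apply/matrixP => k i.
rewrite -(mul_delta_col phi i k) -Hq mulmxA hom_evalp // -mulmxA ev.
rewrite mulmxDr -(scalemxAr ((r1 *m phi *m m0) 0 0)) -(scalemxAr ((r2 *m phi *m m0) 0 0)) Hq.
by rewrite !mxE eqxx andbT.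
Qed.

Lemma end_unit n (phi S : 'M[F]_n) (a b : F) :
  phi = a *: 1%:M + b *: S -> S *m S = 0 -> a = 1 -> \rank phi = n.
Proof.
move=> -> SS ->; rewrite scale1r.
apply/eqP; apply/row_freeP; exists (1%:M - b *: S).
rewrite mulmxDl mul1mx mulmxBr mulmx1 -(scalemxAl b S) -(scalemxAr b S S) SS !scaler0 subr0.
by rewrite subrK.
Qed.

End Theory.
Definition Wd : seq word := [:: [::]; [:: 0]; [:: 1]; [:: 2]; [:: 0; 0]; [:: 0; 1]; [:: 0; 2]; [:: 1; 1]; [:: 1; 2]; [:: 0; 0; 0]; [:: 0; 0; 1]; [:: 0; 0; 2]; [:: 0; 1; 1]; [:: 0; 1; 2]; [:: 1; 1; 1]; [:: 1; 1; 2]; [:: 0; 0; 0; 1]; [:: 0; 0; 0; 2]; [:: 0; 0; 1; 1]; [:: 0; 0; 1; 2]; [:: 0; 1; 1; 1]; [:: 0; 1; 1; 2]; [:: 1; 1; 1; 2]; [:: 0; 0; 0; 1; 1]; [:: 0; 0; 0; 1; 2]; [:: 0; 0; 1; 1; 1]; [:: 0; 0; 1; 1; 2]; [:: 0; 1; 1; 1; 2]; [:: 0; 0; 0; 1; 1; 1]; [:: 0; 0; 0; 1; 1; 2]; [:: 0; 0; 1; 1; 1; 2]; [:: 0; 0; 0; 1; 1; 1; 2]]%N.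
Definition tA : seq (nat * nat) := [:: (1,0); (4,1); (5,2); (6,3); (9,4); (10,5); (11,6); (12,7); (13,8); (16,10); (17,11); (18,12); (19,13); (20,14); (21,15); (23,18); (24,19); (25,20); (26,21); (27,22); (28,25); (29,26); (30,27); (31,30)]%N.
Definition tB : seq (nat * nat) := [:: (1,4); (2,0); (2,5); (3,1); (3,6); (4,9); (5,1); (5,10); (6,11); (7,2); (8,3); (8,5); (10,4); (11,9); (12,5); (12,18); (13,6); (13,19); (14,7); (14,20); (15,8); (15,12); (15,21); (16,9); (18,10); (18,23); (19,11); (19,16); (19,24); (20,12); (20,25); (21,13); (21,26); (22,15); (22,20); (23,16); (24,17); (25,18); (26,19); (26,23); (27,21); (27,30); (28,23); (29,24); (30,26); (30,28); (30,31); (31,29)]%N.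
Definition tC : seq (nat * nat) := [:: (1,1); (2,2); (3,0); (3,3); (6,1); (8,2); (9,9); (10,10); (11,4); (11,11); (12,12); (13,5); (13,13); (14,14); (15,7); (15,15); (17,9); (19,10); (21,12); (22,14); (23,23); (24,16); (24,24); (25,25); (26,18); (26,26); (27,20); (27,27); (29,23); (30,25); (31,28); (31,31)]%N.
Definition fA (i j : nat) : bool := (i, j) \in tA.
Definition fB (i j : nat) : bool := (i, j) \in tB.
Definition fC (i j : nat) : bool := (i, j) \in tC.
Definition fR (g : nat) := match g with 0 => fA | 1 => fB | _ => fC end.

Definition nfcheck : bool :=
  all (fun g => all (fun i => perm_eq (nf 200 [:: g :: nth [::] Wd i])
                                      [seq nth [::] Wd j | j <- iota 0 32 & fR g j i])
                    (iota 0 32)) [:: 0; 1; 2]%N.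

Lemma nfcheckT : nfcheck. Proof. vm_compute. reflexivity. Qed.

Definition wcheck : bool :=
  all (fun i => match nth [::] Wd i with
                | [::] => i == 0
                | g :: w' => [&& index w' Wd < 32, g < 3 &
                               all (fun j => fR g j (index w' Wd) == (j == i)) (iota 0 32)]
                end) (iota 0 32).

Lemma wcheckT : wcheck. Proof. vm_compute. reflexivity. Qed.

Lemma size_Wd : size Wd = 32. Proof. by []. Qed.

Section Reg.
Local Open Scope ring_scope.
Variable F : fieldType.
Hypothesis char2 : (2%N \in [pchar F])%R.

Definition Areg : umod F := @UMod F 32 (bmx F 32 32 fA) (bmx F 32 32 fB) (bmx F 32 32 fC).

Lemma gmxA g : gmx Areg g = bmx F 32 32 (fR g).
Proof. by case: g => [|[|g]]. Qed.

Lemma reg_act (X : umod F) (uX : is_umod X) g (i : 'I_32) : (g < 3)%N ->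
  gmx X g *m evalw X (nth [::] Wd i)
  = \sum_(j < 32) ((fR g j i)%:R : F) *: evalw X (nth [::] Wd j).
Proof.
move=> hg.
have P : perm_eq (nf 200 [:: g :: nth [::] Wd i])
                 [seq nth [::] Wd j | j <- iota 0 32 & fR g j i].
  have /allP /(_ g) := nfcheckT.
  have gin : g \in [:: 0; 1; 2]%N by case: g hg => [|[|[|]]].
  move=> /(_ gin) /allP; apply; by rewrite mem_iota ltn_ord.
have -> : gmx X g *m evalw X (nth [::] Wd i) = evalp X [:: g :: nth [::] Wd i].
  by rewrite /evalp big_seq1.
rewrite -(nf_sound char2 uX 200) /evalp (perm_big _ P) big_map big_filter.
rewrite big_mkcond -[iota 0 32]/(index_iota 0 32) big_mkord.
by apply: eq_bigr => j _; case: (fR g j i); rewrite ?scale1r ?scale0r.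
Qed.

Definition Phi (X : umod F) (x : 'cV[F]_(udim X)) : 'M[F]_(udim X, 32) :=
  \matrix_(r, i) (evalw X (nth [::] Wd i) *m x) r 0.
Arguments Phi : clear implicits.

Lemma Phi_g (X : umod F) (uX : is_umod X) x g : (g < 3)%N ->
  Phi X x *m gmx Areg g = gmx X g *m Phi X x.
Proof.
move=> hg; rewrite gmxA; apply/matrixP => r i.
transitivity (((gmx X g *m evalw X (nth [::] Wd i)) *m x) r 0); last first.
  rewrite -mulmxA !mxE; apply: eq_bigr => k _; by rewrite !mxE.
rewrite (reg_act uX i hg) mulmx_suml summxE mxE; apply: eq_bigr => j _.
by rewrite -scalemxAl !mxE mulrC.
Qed.

Lemma Phi_hom (X : umod F) (uX : is_umod X) x : @is_hom F Areg X (Phi X x).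
Proof. by split; [exact: (@Phi_g X uX x 0) | exact: (@Phi_g X uX x 1) | exact: (@Phi_g X uX x 2)]. Qed.

Lemma evalA_e0 (i : 'I_32) :
  evalw Areg (nth [::] Wd i) *m delta_mx 0 0 = delta_mx i (0 : 'I_1).
Proof.
suff H : forall w (i : 'I_32), nth [::] Wd i = w ->
    evalw Areg w *m delta_mx 0 0 = delta_mx i (0 : 'I_1) by exact: H.
have WC := wcheckT.
elim=> [|g w IH] {}i hi.
  move: WC => /allP /(_ i); rewrite mem_iota ltn_ord hi => /(_ isT) /eqP hi0.
  by rewrite /= mul1mx; congr delta_mx; apply: val_inj.
move: WC => /allP /(_ i); rewrite mem_iota ltn_ord hi => /(_ isT) /and3P [hw hg /allP hj].
have hw' : nth [::] Wd (Ordinal hw) = w.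
  by apply: nth_index; rewrite -index_mem size_Wd.
rewrite /= -mulmxA (IH _ hw') gmxA; apply/matrixP => j k.
rewrite (ord1 k) mul_delta_col !mxE /=.
have := hj j; rewrite mem_iota ltn_ord => /(_ isT) /eqP ->.
by rewrite eqxx andbT.
Qed.

Lemma proj_A : projective Areg.
Proof.
move=> X Y g h uX uY hg sg hh.
have /row_freeP [B hB] : row_free g by rewrite /row_free sg.
pose y := h *m delta_mx (0 : 'I_32) (0 : 'I_1).
exists (Phi X (B *m y)); split; first exact: Phi_hom.
apply/matrixP => r i.
transitivity ((g *m evalw X (nth [::] Wd i) *m (B *m y)) r 0).
  rewrite -mulmxA !mxE; apply: eq_bigr => k _; by rewrite !mxE.
rewrite hom_evalw // -mulmxA [g *m (B *m y)]mulmxA hB mul1mx /y mulmxA -hom_evalw //.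
by rewrite -mulmxA evalA_e0 mul_delta_col.
Qed.

End Reg.
Definition bzero := fun _ _ : nat => false.
Definition bid := fun i j : nat => i == j.
Definition btr (f : nat -> nat -> bool) := fun i j : nat => f j i.
Definition bevalw n (fs : nat -> nat -> nat -> bool) (w : word) :=
  foldr (fun g acc => mat n n (bmul n (fs g) acc)) bid w.
Definition bevalp n fs (p : poly) := foldr (fun w acc => mat n n (badd (bevalw n fs w) acc)) bzero p.

Definition umod_check n (fs : nat -> nat -> nat -> bool) : bool :=
  [&& bmxeqb n n (badd (bmul n (fs 0) (fs 1)) (bmul n (fs 1) (fs 0))) (fs 2),
      bmxeqb n n (badd (bmul n (fs 0) (fs 2)) (bmul n (fs 2) (fs 0))) (fs 0),
      bmxeqb n n (badd (bmul n (fs 1) (fs 2)) (bmul n (fs 2) (fs 1))) (fs 1) &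
      [&& bmxeqb n n (bmul n (fs 0) (bmul n (fs 0) (bmul n (fs 0) (fs 0)))) bzero,
      bmxeqb n n (bmul n (fs 1) (bmul n (fs 1) (bmul n (fs 1) (fs 1)))) bzero &
      bmxeqb n n (badd (bmul n (fs 2) (fs 2)) (fs 2)) bzero]]%N.

Definition hom_check nX nY (fX fY : nat -> nat -> nat -> bool) ff : bool :=
  all (fun g => bmxeqb nY nX (bmul nX ff (fX g)) (bmul nY (fY g) ff)) [:: 0; 1; 2]%N.

Section Conc.
Local Open Scope ring_scope.
Variable F : fieldType.
Hypothesis char2 : (2%N \in [pchar F])%R.

Notation bmx := (bmx F).

Lemma evalw_b (X : umod F) fs :
  (forall g, gmx X g = bmx _ _ (fs g)) ->
  forall w, evalw X w = bmx _ _ (bevalw (udim X) fs w).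
Proof.
move=> hX; elim=> [|g w IH] /=; first by rewrite -bmx1.
by rewrite IH hX (bmxMm char2).
Qed.

Lemma evalp_b (X : umod F) fs :
  (forall g, gmx X g = bmx _ _ (fs g)) ->
  forall p, evalp X p = bmx _ _ (bevalp (udim X) fs p).
Proof.
move=> hX; elim=> [|w p IH].
  by rewrite /evalp big_nil /= bmx0.
by rewrite /evalp big_cons -/(evalp X p) IH (evalw_b hX) (bmxDm char2).
Qed.

Lemma umodb (X : umod F) fs :
  (forall g, gmx X g = bmx _ _ (fs g)) -> umod_check (udim X) fs -> is_umod X.
Proof.
move=> hX /and4P [c1 c2 c3 /and3P [c4 c5 c6]].
have hA : actA X = bmx _ _ (fs 0%N) by exact: (hX 0%N).
have hB : actB X = bmx _ _ (fs 1%N) by exact: (hX 1%N).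
have hC : actC X = bmx _ _ (fs 2%N) by exact: (hX 2%N).
have p4 : forall A : 'M[F]_(udim X), A ^+ 4 = A *m (A *m (A *m A)).
  by move=> A; rewrite !exprS expr0 mulr1 !mulmxE.
have z : (0 : 'M[F]_(udim X)) = bmx _ _ bzero by rewrite (bmx0 F).
split.
- by rewrite hA hB hC !(bmxM char2) (bmxD char2); apply: bmx_eq.
- by rewrite hA hC !(bmxM char2) (bmxD char2); apply: bmx_eq.
- by rewrite hB hC !(bmxM char2) (bmxD char2); apply: bmx_eq.
- by split; rewrite p4 ?hA ?hB !(bmxM char2) z; apply: bmx_eq.
- by rewrite hC !(bmxM char2) (bmxD char2) z; apply: bmx_eq.
Qed.

Lemma homb (X Y : umod F) fX fY ff :
  (forall g, gmx X g = bmx _ _ (fX g)) -> (forall g, gmx Y g = bmx _ _ (fY g)) ->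
  hom_check (udim X) (udim Y) fX fY ff -> @is_hom F X Y (bmx _ _ ff).
Proof.
move=> hX hY /and3P [c0 c1 c2].
split; [move: (hX 0%N) (hY 0%N) c0 | move: (hX 1%N) (hY 1%N) c1 | move: (hX 2%N) (hY 2%N) c2];
  rewrite /= => -> -> c; rewrite !(bmxM char2); apply: bmx_eq; move: c; rewrite ?andbT; apply.
Qed.

Lemma delta_b n (i : 'I_n) : delta_mx i (0 : 'I_1) = bmx n 1 (fun k _ => k == i).
Proof. by apply/matrixP => k l; rewrite !mxE (ord1 l) eqxx andbT. Qed.

Lemma Smx_b (X : umod F) fs q fm1 :
  (forall g, gmx X g = bmx _ _ (fs g)) ->
  Smx (X:=X) q (bmx _ 1 fm1) = bmx _ _ (mat (udim X) (udim X) (fun k i => bmul (udim X) (bevalp (udim X) fs (q i)) fm1 k 0%N)).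
Proof.
move=> hX; rewrite bmx_mat; apply/matrixP => k i; rewrite [LHS]mxE (evalp_b hX) (bmxM char2) !mxE.
by [].
Qed.

End Conc.
Section Ess.
Local Open Scope ring_scope.
Variable F : fieldType.

Lemma ess_epi_gen (V M : umod F) (p : 'M[F]_(udim V, udim M)) (s : 'M[F]_(udim M, udim V))
  (m0 m1 : 'cV[F]_(udim M)) (r1 r2 : 'rV[F]_(udim M)) (q : nat -> poly) (t : poly)
  (j : 'I_(udim V)) :
  is_umod V -> projective M -> is_hom p -> p *m s = 1%:M ->
  (forall i : 'I_(udim M), evalp M (q i) *m m0 = delta_mx i 0) ->
  evalp M t = m0 *m r1 + m1 *m r2 -> evalp M t *m m0 = m0 ->
  Smx q m1 *m Smx q m1 = 0 -> p *m Smx q m1 = 0 -> essential_epi p.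
Proof.
move=> uV pM hp ps Hq Ht Ht0 SS pS.
split => //.
- by apply/eqP/row_freeP; exists s.
move=> X g uX hg sg.
have [k [hk ek]] := pM X V (p *m g) p uX uV (hom_comp hp hg) sg hp.
have hphi := hom_comp hg hk.
have E := end_form Hq Ht Ht0 hphi.
have a1 : (r1 *m (g *m k) *m m0) 0 0 = 1.
  have : p *m (g *m k) = p by rewrite mulmxA.
  rewrite {1}E mulmxDr -!scalemxAr mulmx1 pS scaler0 addr0 => /(congr1 (mulmx^~ s)).
  rewrite -scalemxAl ps => /matrixP /(_ j j); rewrite !mxE eqxx /=.
  by rewrite mulr1.
have rk := end_unit E SS a1.
apply/eqP; rewrite eqn_leq rank_leq_row /= -{1}rk; exact: mxrankM_maxl.
Qed.

Lemma ess_mono_gen (V M : umod F) (i : 'M[F]_(udim M, udim V)) (r : 'M[F]_(udim V, udim M))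
  (m0 m1 : 'cV[F]_(udim M)) (r1 r2 : 'rV[F]_(udim M)) (q : nat -> poly) (t : poly)
  (j : 'I_(udim V)) :
  is_umod V -> injective M -> is_hom i -> r *m i = 1%:M ->
  (forall i : 'I_(udim M), evalp M (q i) *m m0 = delta_mx i 0) ->
  evalp M t = m0 *m r1 + m1 *m r2 -> evalp M t *m m0 = m0 ->
  Smx q m1 *m Smx q m1 = 0 -> Smx q m1 *m i = 0 -> essential_mono i.
Proof.
move=> uV iM hi ri Hq Ht Ht0 SS Si.
split => //.
- by apply/eqP/row_fullP; exists r.
move=> X g uX hg ig.
have [k [hk ek]] := iM V X (g *m i) i uV uX (hom_comp hg hi) ig hi.
have hphi := hom_comp hk hg.
have E := end_form Hq Ht Ht0 hphi.
have a1 : (r1 *m (k *m g) *m m0) 0 0 = 1.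
  have : (k *m g) *m i = i by rewrite -mulmxA.
  rewrite {1}E mulmxDl -!scalemxAl mul1mx Si scaler0 addr0 => /(congr1 (mulmx r)).
  rewrite -scalemxAr ri => /matrixP /(_ j j); rewrite !mxE eqxx /=.
  by rewrite mulr1.
have rk := end_unit E SS a1.
apply/eqP; rewrite eqn_leq rank_leq_col /= -{1}rk; exact: mxrankM_maxr.
Qed.

End Ess.
Definition tiM : seq (nat * nat) := [:: (0,4); (1,5); (3,4); (4,6); (5,4); (6,5); (9,7); (10,5); (11,6); (13,4); (14,0); (16,6); (17,7); (18,4); (19,5); (20,1); (22,0); (23,5); (24,6); (25,2); (26,4); (27,1); (28,3); (29,5); (30,2); (31,3)]%N.
Definition tpM : seq (nat * nat) := [:: (0,14); (1,7); (1,20); (2,2); (2,12); (2,25); (3,5); (3,18); (3,28); (4,0); (5,1); (6,4); (7,9)]%N.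
Definition tiN : seq (nat * nat) := [:: (2,4); (5,5); (7,0); (8,4); (10,6); (12,1); (13,5); (15,0); (16,7); (18,2); (19,6); (20,0); (21,1); (23,3); (24,7); (25,1); (25,4); (26,2); (27,0); (28,2); (28,5); (29,3); (30,1); (30,4); (31,2); (31,5)]%N.
Definition tpN : seq (nat * nat) := [:: (0,7); (1,12); (2,0); (2,18); (3,1); (3,23); (4,2); (5,0); (5,5); (6,1); (6,10); (7,4); (7,16)]%N.
Definition fiM i j : bool := (i, j) \in tiM.
Definition fpM i j : bool := (i, j) \in tpM.
Definition fiN i j : bool := (i, j) \in tiN.
Definition fpN i j : bool := (i, j) \in tpN.

Definition fV0 (g : nat) := bzero.
Definition fV1 (g : nat) := match g with
  | 0 => fun i j : nat => (i, j) \in [:: (1,0); (2,1)]%N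
  | 1 => fun i j : nat => (i, j) \in [:: (0,1); (1,2)]%N
  | _ => fun i j : nat => (i, j) \in [:: (0,0); (2,2)]%N end.
Definition fM (g : nat) := match g with
  | 0 => fun i j : nat => (i, j) \in [:: (1,0); (2,1); (3,2); (5,4); (6,5); (7,6)]%N
  | 1 => fun i j : nat => (i, j) \in [:: (0,1); (1,2); (2,4); (3,5); (5,6); (6,7)]%N
  | _ => fun i j : nat => (i, j) \in [:: (0,0); (2,2); (5,5); (7,7)]%N end.
Definition fN (g : nat) := match g with
  | 0 => fun i j : nat => (i, j) \in [:: (1,0); (2,1); (3,2); (5,4); (6,5); (7,6)]%N
  | 1 => fun i j : nat => (i, j) \in [:: (1,2); (2,3); (0,4); (3,7); (1,5); (4,5); (2,6); (5,6)]%N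
  | _ => fun i j : nat => (i, j) \in [:: (1,1); (3,3); (4,4); (6,6)]%N end.

Definition fJ (i j : nat) : bool := (i + j == 7)%N.
Definition fpV0 (i j : nat) : bool := (j == 4)%N.
Definition fsV0 (i j : nat) : bool := (i == 4)%N.
Definition fiV0 (i j : nat) : bool := (i == 3)%N.
Definition frV0 (i j : nat) : bool := (j == 3)%N.
Definition fpV1 (i j : nat) : bool := (j == i + 4)%N.
Definition fsV1 (i j : nat) : bool := (i == j + 4)%N.
Definition fiV1 (i j : nat) : bool := (i == j + 1)%N.
Definition frV1 (i j : nat) : bool := (j == i + 1)%N.
Definition fm0 (i j : nat) : bool := (i == 4)%N.
Definition fr1 (i j : nat) : bool := (j == 4)%N.
Definition fm1M (i j : nat) : bool := (i == 3)%N.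
Definition fr2M (i j : nat) : bool := (j == 3)%N.
Definition fm1N (i j : nat) : bool := (i == 1)%N.
Definition fr2N (i j : nat) : bool := (j == 1)%N.

Definition qM : seq poly := [:: [:: [:: 1; 1; 1]]; [:: [:: 1; 1]]; [:: [:: 1]]; [:: [:: 1; 0]];
  [:: [::]]; [:: [:: 0]]; [:: [:: 0; 0]]; [:: [:: 0; 0; 0]]]%N.
Definition qN : seq poly := [:: [:: [:: 1]]; [:: [:: 1; 0]; [::]]; [:: [:: 0; 1; 0]; [:: 0]];
  [:: [:: 0; 0; 1; 0]; [:: 0; 0]]; [:: [::]]; [:: [:: 0]]; [:: [:: 0; 0]]; [:: [:: 0; 0; 0]]]%N.
Definition tM : poly := [:: [::]; [:: 2]; [:: 0; 1]; [:: 0; 0; 1; 1]]%N.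
Definition tN : poly := [:: [:: 2]; [:: 0; 0; 1; 1; 2]]%N.

Definition qcheck (fs : nat -> nat -> nat -> bool) (q : seq poly) :=
  all (fun i => bmxeqb 8 1 (bmul 8 (bevalp 8 fs (nth [::] q i)) fm0) (fun k _ => k == i)) (iota 0 8).

Lemma qcheckM : qcheck fM qM. Proof. vm_compute. reflexivity. Qed.
Lemma qcheckN : qcheck fN qN. Proof. vm_compute. reflexivity. Qed.

Ltac vmc := cbn [udim Nmod Mmod V0 V1 Areg trm]; vm_compute; reflexivity.

Section Concrete.
Local Open Scope ring_scope.
Variable F : fieldType.
Hypothesis char2 : (2%N \in [pchar F])%R.
Notation bmx := (bmx F).

Lemma gV0 g : gmx (V0 F) g = bmx 1 1 (fV0 g).
Proof. by case: g => [|[|g]]; rewrite /= bmx0. Qed.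
Lemma gV1 g : gmx (V1 F) g = bmx 3 3 (fV1 g).
Proof. by case: g => [|[|g]]; exact: mx01E. Qed.
Lemma gM g : gmx (Mmod F) g = bmx 8 8 (fM g).
Proof. by case: g => [|[|g]]; exact: mx01E. Qed.
Lemma gN g : gmx (Nmod F) g = bmx 8 8 (fN g).
Proof. by case: g => [|[|g]]; exact: mx01E. Qed.

Lemma gtr (X : umod F) fs : (forall g, gmx X g = bmx _ _ (fs g)) ->
  forall g, gmx (trm X) g = bmx _ _ (fun i j => fs g j i).
Proof.
move=> hX g; case: g => [|[|g]]; [move: (hX 0%N) | move: (hX 1%N) | move: (hX g.+2)];
  rewrite /= => ->; exact: bmx_tr.
Qed.

Lemma uV0 : is_umod (V0 F). Proof. apply: (umodb char2 gV0). by vmc. Qed.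
Lemma uV1 : is_umod (V1 F). Proof. apply: (umodb char2 gV1). by vmc. Qed.
Lemma uM : is_umod (Mmod F). Proof. apply: (umodb char2 gM). by vmc. Qed.
Lemma uN : is_umod (Nmod F). Proof. apply: (umodb char2 gN). by vmc. Qed.

Lemma projM : projective (Mmod F).
Proof.
apply: (@proj_retract F (Areg F) (Mmod F) (bmx 32 8 fiM) (bmx 8 32 fpM)).
- apply: (homb char2 gM (@gmxA F)). by vmc.
- apply: (homb char2 (@gmxA F) gM). by vmc.
- rewrite (bmxM char2) -bmx1; apply: bmx_eq. by vmc.
- exact: proj_A.
Qed.

Lemma projN : projective (Nmod F).
Proof.
apply: (@proj_retract F (Areg F) (Nmod F) (bmx 32 8 fiN) (bmx 8 32 fpN)).
- apply: (homb char2 gN (@gmxA F)). by vmc.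
- apply: (homb char2 (@gmxA F) gN). by vmc.
- rewrite (bmxM char2) -bmx1; apply: bmx_eq. by vmc.
- exact: proj_A.
Qed.

Lemma injM : injective (Mmod F).
Proof.
apply: (@inj_iso F (trm (Mmod F))); last exact: proj_tr_inj projM.
exists (bmx 8 8 fJ), (bmx 8 8 fJ); split.
- apply: (homb char2 (gtr gM) gM). by vmc.
- apply: (homb char2 gM (gtr gM)). by vmc.
- rewrite (bmxM char2) -bmx1; apply: bmx_eq. by vmc.
- rewrite (bmxM char2) -bmx1; apply: bmx_eq. by vmc.
Qed.

Lemma injN : injective (Nmod F).
Proof.
apply: (@inj_iso F (trm (Nmod F))); last exact: proj_tr_inj projN.
exists (bmx 8 8 fJ), (bmx 8 8 fJ); split.
- apply: (homb char2 (gtr gN) gN). by vmc.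
- apply: (homb char2 gN (gtr gN)). by vmc.
- rewrite (bmxM char2) -bmx1; apply: bmx_eq. by vmc.
- rewrite (bmxM char2) -bmx1; apply: bmx_eq. by vmc.
Qed.

Lemma HqM : forall i : 'I_(udim (Mmod F)),
  evalp (Mmod F) (nth [::] qM i) *m bmx 8 1 fm0 = delta_mx i 0.
Proof.
move=> i; rewrite (evalp_b char2 gM) (bmxM char2) delta_b; apply: bmx_eq.
by move: qcheckM => /allP; apply; rewrite mem_iota ltn_ord.
Qed.

Lemma HqN : forall i : 'I_(udim (Nmod F)),
  evalp (Nmod F) (nth [::] qN i) *m bmx 8 1 fm0 = delta_mx i 0.
Proof.
move=> i; rewrite (evalp_b char2 gN) (bmxM char2) delta_b; apply: bmx_eq.
by move: qcheckN => /allP; apply; rewrite mem_iota ltn_ord.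
Qed.

Lemma epiM : @essential_epi F (Mmod F) (V0 F) (bmx 1 8 fpV0).
Proof.
apply: (@ess_epi_gen F (V0 F) (Mmod F) _ (bmx 8 1 fsV0) (bmx 8 1 fm0) (bmx 8 1 fm1M)
          (bmx 1 8 fr1) (bmx 1 8 fr2M) (fun i => nth [::] qM i) tM 0).
- exact: uV0.
- exact: projM.
- apply: (homb char2 gM gV0). by vmc.
- rewrite (bmxM char2) -bmx1; apply: bmx_eq. by vmc.
- exact: HqM.
- rewrite (evalp_b char2 gM) !(bmxMm char2) (bmxDm char2); apply: bmx_eq. by vmc.
- rewrite (evalp_b char2 gM) !(bmxMm char2); apply: bmx_eq. by vmc.
- rewrite (@Smx_b F char2 (Mmod F) fM _ _ gM) (bmxMm char2) -(bmx0 F); apply: bmx_eq. by vmc.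
- rewrite (@Smx_b F char2 (Mmod F) fM _ _ gM) (bmxMm char2) -(bmx0 F); apply: bmx_eq. by vmc.
Qed.

Lemma monoM : @essential_mono F (V0 F) (Mmod F) (bmx 8 1 fiV0).
Proof.
apply: (@ess_mono_gen F (V0 F) (Mmod F) _ (bmx 1 8 frV0) (bmx 8 1 fm0) (bmx 8 1 fm1M)
          (bmx 1 8 fr1) (bmx 1 8 fr2M) (fun i => nth [::] qM i) tM 0).
- exact: uV0.
- exact: injM.
- apply: (homb char2 gV0 gM). by vmc.
- rewrite (bmxM char2) -bmx1; apply: bmx_eq. by vmc.
- exact: HqM.
- rewrite (evalp_b char2 gM) !(bmxMm char2) (bmxDm char2); apply: bmx_eq. by vmc.
- rewrite (evalp_b char2 gM) !(bmxMm char2); apply: bmx_eq. by vmc.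
- rewrite (@Smx_b F char2 (Mmod F) fM _ _ gM) (bmxMm char2) -(bmx0 F); apply: bmx_eq. by vmc.
- rewrite (@Smx_b F char2 (Mmod F) fM _ _ gM) (bmxMm char2) -(bmx0 F); apply: bmx_eq. by vmc.
Qed.

Lemma epiN : @essential_epi F (Nmod F) (V1 F) (bmx 3 8 fpV1).
Proof.
apply: (@ess_epi_gen F (V1 F) (Nmod F) _ (bmx 8 3 fsV1) (bmx 8 1 fm0) (bmx 8 1 fm1N)
          (bmx 1 8 fr1) (bmx 1 8 fr2N) (fun i => nth [::] qN i) tN 0).
- exact: uV1.
- exact: projN.
- apply: (homb char2 gN gV1). by vmc.
- rewrite (bmxM char2) -bmx1; apply: bmx_eq. by vmc.
- exact: HqN.
- rewrite (evalp_b char2 gN) !(bmxMm char2) (bmxDm char2); apply: bmx_eq. by vmc.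
- rewrite (evalp_b char2 gN) !(bmxMm char2); apply: bmx_eq. by vmc.
- rewrite (@Smx_b F char2 (Nmod F) fN _ _ gN) (bmxMm char2) -(bmx0 F); apply: bmx_eq. by vmc.
- rewrite (@Smx_b F char2 (Nmod F) fN _ _ gN) (bmxMm char2) -(bmx0 F); apply: bmx_eq. by vmc.
Qed.

Lemma monoN : @essential_mono F (V1 F) (Nmod F) (bmx 8 3 fiV1).
Proof.
apply: (@ess_mono_gen F (V1 F) (Nmod F) _ (bmx 3 8 frV1) (bmx 8 1 fm0) (bmx 8 1 fm1N)
          (bmx 1 8 fr1) (bmx 1 8 fr2N) (fun i => nth [::] qN i) tN 0).
- exact: uV1.
- exact: injN.
- apply: (homb char2 gV1 gN). by vmc.
- rewrite (bmxM char2) -bmx1; apply: bmx_eq. by vmc.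
- exact: HqN.
- rewrite (evalp_b char2 gN) !(bmxMm char2) (bmxDm char2); apply: bmx_eq. by vmc.
- rewrite (evalp_b char2 gN) !(bmxMm char2); apply: bmx_eq. by vmc.
- rewrite (@Smx_b F char2 (Nmod F) fN _ _ gN) (bmxMm char2) -(bmx0 F); apply: bmx_eq. by vmc.
- rewrite (@Smx_b F char2 (Nmod F) fN _ _ gN) (bmxMm char2) -(bmx0 F); apply: bmx_eq. by vmc.
Qed.

Lemma main_gen :
  [/\ proj_cover_iso (V0 F) (Mmod F), inj_env_iso (V0 F) (Mmod F),
      proj_cover_iso (V1 F) (Nmod F) & inj_env_iso (V1 F) (Nmod F)].
Proof.
have pcM : projective_cover (Mmod F) (V0 F) by split; [exact: uM | exact: projM | exists (bmx 1 8 fpV0); exact: epiM].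
have ieM : injective_envelope (Mmod F) (V0 F) by split; [exact: uM | exact: injM | exists (bmx 8 1 fiV0); exact: monoM].
have pcN : projective_cover (Nmod F) (V1 F) by split; [exact: uN | exact: projN | exists (bmx 3 8 fpV1); exact: epiN].
have ieN : injective_envelope (Nmod F) (V1 F) by split; [exact: uN | exact: injN | exists (bmx 8 3 fiV1); exact: monoN].
split; split => // X hX.
- exact: pc_unique uV0 pcM hX.
- exact: ie_unique uV0 ieM hX.
- exact: pc_unique uV1 pcN hX.
- exact: ie_unique uV1 ieN hX.
Qed.

End Concrete.

Theorem proposition3p11 (F : closedFieldType) (char2 : (2%N \in [pchar F])%R) :
  [/\ proj_cover_iso (V0 F) (Mmod F), inj_env_iso (V0 F) (Mmod F),
      proj_cover_iso (V1 F) (Nmod F) & inj_env_iso (V1 F) (Nmod F)].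
Proof. exact: (@main_gen F char2). Qed.
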